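(* Let $q$ be a prime power and $m$ a positive integer with $\gcd(m,q)=1$, and let $R=\mathbb{F}_q[x]/\langle x^m-1\rangle$. Let $C$ and $D$ be quasi-cyclic codes over $\mathbb{F}_q$ of length $2m$ and index $2$, viewed as $R$-submodules of $R^2$. Suppose $C$ is generated (as an $R$-module) by $(g_{11}(x),g_{12}(x))$ and $(0,g_{22}(x))$, and $D$ is generated by $(f_{11}(x),f_{12}(x))$ and $(0,f_{22}(x))$, where the polynomials $g_{ij}(x),f_{ij}(x)\in\mathbb{F}_q[x]$ satisfy $g_{11}(x)\mid x^m-1$, $g_{22}(x)\mid x^m-1$, $\deg g_{12}(x)<\deg g_{22}(x)$, $g_{11}(x)g_{22}(x)\mid (x^m-1)g_{12}(x)$, and likewise $f_{11}(x)\mid x^m-1$, $f_{22}(x)\mid x^m-1$, $\deg f_{12}(x)<\deg f_{22}(x)$, $f_{11}(x)f_{22}(x)\mid (x^m-1)f_{12}(x)$. Let $g(x)=\gcd(g_{11}(x),g_{22}(x))$, $f(x)=\gcd(f_{11}(x),f_{22}(x))$, and write $g_{22}(x)=g(x)g_{22}'(x)$, $f_{22}(x)=f(x)f_{22}'(x)$. Then $(C,D)$ is a linear complementary pair of codes if and only if all of the following hold: (I) $\gcd(f_{11}(x),g_{11}(x))=1$; (II) $g(x)=\dfrac{x^m-1}{\mathrm{lcm}(f_{11}(x),f_{22}(x))}$; (III) $f(x)=\dfrac{x^m-1}{\mathrm{lcm}(g_{11}(x),g_{22}(x))}$; (IV) $\gcd\big(g_{22}'(x),f_{22}'(x),\,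g_{11}(x)f_{12}(x)-g_{12}(x)f_{11}(x)\big)=1$.
   Context: A pair $(C,D)$ of $\mathbb{F}_q$-linear codes of the same length $n$ is a linear complementary pair (LCP) of codes if $C\cap D=\{0\}$ and $C+D=\mathbb{F}_q^n$. A quasi-cyclic code of length $2m$ and index $2$ is a linear code of length $2m$ invariant under the square of the cyclic shift; it is identified with an $R$-submodule of $R^2$ via $(c_{0,0},c_{0,1},c_{1,0},c_{1,1},\dots,c_{m-1,0},c_{m-1,1})\mapsto(c_0(x),c_1(x))$ with $c_j(x)=\sum_{i=0}^{m-1}c_{i,j}x^i$. gcd and lcm denote monic gcd and lcm of polynomials. *)

(* Defs.v *)
From HB Require Import structures.
From mathcomp Require Import all_boot all_order all_algebra all_field.
Set Implicit Arguments. Unset Strict Implicit. Unset Printing Implicit Defensive.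
Import GRing.Theory.
Local Open Scope ring_scope.

Section QC.
Variable F : finFieldType.

Definition xm1 (m : nat) : {poly F} := 'X^m - 1.

(* monic normalization of a polynomial (0 stays 0) *)
Definition monicize (p : {poly F}) : {poly F} := (lead_coef p)^-1 *: p.

Definition mgcd (p q : {poly F}) : {poly F} := monicize (gcdp p q).
Definition mlcm (p q : {poly F}) : {poly F} := monicize ((p * q) %/ gcdp p q).

(* Elements of R^2, R = F[x]/<x^m-1>, are represented by pairs of
   polynomials of degree < m (canonical representatives). *)
Definition inR2 (m : nat) (c : {poly F} * {poly F}) : Prop :=
  (size c.1 <= m)%N /\ (size c.2 <= m)%N.

Definition qc_code (m : nat) (g11 g12 g22 : {poly F})
    (c : {poly F} * {poly F}) : Prop :=
  exists a b : {poly F},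
    c = ((a * g11) %% xm1 m, (a * g12 + b * g22) %% xm1 m).

Definition LCP (m : nat) (C D : {poly F} * {poly F} -> Prop) : Prop :=
  (forall c, C c -> D c -> c = (0, 0)) /\
  (forall u, inR2 m u -> exists c d, C c /\ D d /\ u = (c.1 + d.1, c.2 + d.2)).

End QC.

Arguments xm1 {F} m.
Arguments inR2 {F} m c.
Arguments qc_code {F} m g11 g12 g22 c.
Arguments LCP {F} m C D.

(* Main.v *)
Require Import Defs.
From HB Require Import structures.
From mathcomp Require Import all_boot all_order all_algebra all_field.
From Stdlib Require Import Classical.
From mathcomp Require Import ring.
Set Implicit Arguments. Unset Strict Implicit. Unset Printing Implicit Defensive.
Import GRing.Theory.
Local Open Scope ring_scope.

Section Gen.
Variable F : finFieldType.
Implicit Types p q a b x y N A B : {poly F}.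

Lemma irr_dvdM p a b : irreducible_poly p -> p %| a * b -> (p %| a) || (p %| b).
Proof.
move=> ip H; case pa: (p %| a) => //=.
have cp : coprimep p a by rewrite irreducible_poly_coprime // pa.
by rewrite -(Gauss_dvdpr _ cp).
Qed.

Lemma irr_size p : irreducible_poly p -> (1 < size p)%N.
Proof. by case. Qed.

Lemma irr_ndvd1 p : irreducible_poly p -> ~~ (p %| 1).
Proof. by move=> ip; rewrite dvdp1; have := irr_size ip; case: (size p) => [|[|]]. Qed.

Lemma irr_factor x : (1 < size x)%N -> exists p, irreducible_poly p /\ p %| x.
Proof.
move: {2}(size x) (leqnn (size x)) => n; elim: n x => [|n IH] x hs hx.
  by move: hs; rewrite leqn0 => /eqP e; rewrite e in hx.
case: (classic (irreducible_poly x)) => [ix|nix]; first by exists x; split.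
have : exists q, size q != 1%N /\ q %| x /\ ~~ (q %= x).
  apply: NNPP => hn; apply: nix; split => // q sq qx.
  by apply: NNPP => nq; apply: hn; exists q; split => //; split => //; apply/negP.
case=> q [sq [qx nqx]].
have x0 : x != 0 by rewrite -size_poly_gt0 ltnW.
have q0 : q != 0 by apply: contraNneq x0 => e; move: qx; rewrite e dvd0p.
have sqx : (size q < size x)%N.
  rewrite ltn_neqAle dvdp_leq // andbT; apply: contra nqx => e.
  by rewrite -dvdp_size_eqp.
have sq1 : (1 < size q)%N.
  by move: q0 sq; rewrite -size_poly_gt0; case: (size q) => [|[|]].
have [p [ip pq]] := IH q (leq_trans (leq_trans sqx hs) (leqnn _)) sq1.
  by exists p; split => //; apply: dvdp_trans qx.
Qed.

Lemma coprime_irr x y : x != 0 ->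
  (forall p, irreducible_poly p -> p %| x -> p %| y -> False) -> coprimep x y.
Proof.
move=> x0 H; apply: NNPP => /negP nc.
have g0 : gcdp x y != 0 by rewrite gcdp_eq0 negb_and x0.
have sg : (1 < size (gcdp x y))%N.
  move: nc g0; rewrite /coprimep -size_poly_gt0; case: (size _) => [|[|]] //.
have [p [ip pg]] := irr_factor sg.
by apply: (H p ip); [apply: dvdp_trans pg (dvdp_gcdl _ _)|apply: dvdp_trans pg (dvdp_gcdr _ _)].
Qed.

Lemma coprime_irrN x y p : coprimep x y -> irreducible_poly p -> p %| x -> p %| y -> False.
Proof.
move=> /coprimepP c ip px py; have := c p px py.
by rewrite -size_poly_eq1 => /eqP e; have := irr_size ip; rewrite e.
Qed.

Definition sqf N := forall p, irreducible_poly p -> ~~ (p * p %| N).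

Lemma sqf_dvd N A B : N != 0 -> sqf N -> A %| N ->
  (forall p, irreducible_poly p -> p %| A -> p %| B) -> A %| B.
Proof.
move=> N0 sN AN H.
have A0 : A != 0 by apply: contraNneq N0 => e; move: AN; rewrite e dvd0p.
set G := gcdp A B.
have G0 : G != 0 by rewrite gcdp_eq0 negb_and A0.
have eA : A = (A %/ G) * G by rewrite divpK // dvdp_gcdl.
have Q0 : A %/ G != 0 by apply: contraNneq A0 => e; rewrite eA e mul0r.
case: (ltnP 1 (size (A %/ G))) => hs.
  have [p [ip pQ]] := irr_factor hs.
  have pA : p %| A by rewrite eA; apply: dvdp_mulr.
  have pG : p %| G by rewrite dvdp_gcd pA H.
  have : p * p %| N by apply: dvdp_trans AN; rewrite eA dvdp_mul.
  by rewrite (negPf (sN p ip)).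
have s1 : size (A %/ G) = 1%N.
  by move: Q0 hs; rewrite -size_poly_gt0; case: (size _) => [|[|]].
have : A %| G by rewrite {1}eA -{3}(mul1r G) dvdp_mul2r // dvdp1 s1.
by move=> AG; apply: dvdp_trans AG (dvdp_gcdr _ _).
Qed.

Lemma dvdp_modN p N x : p %| N -> (p %| x %% N) = (p %| x).
Proof. by move=> pN; rewrite -dvdp_mod. Qed.

Lemma monicizeE x : x != 0 -> monicize x %= x.
Proof. by move=> x0; rewrite /monicize eqp_scale // invr_eq0 lead_coef_eq0. Qed.

Lemma monicize_monic x : x != 0 -> monicize x \is monic.
Proof.
by move=> x0; rewrite monicE /monicize lead_coefZ mulVf // lead_coef_eq0.
Qed.

Lemma monicize_eq1 x : (monicize x == 1) = (size x == 1%N).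
Proof.
have [->|x0] := eqVneq x 0; first by rewrite /monicize scaler0 size_poly0 eq_sym oner_eq0.
apply/eqP/eqP => [e|s].
  by rewrite -(eqp_size (monicizeE x0)) e size_poly1.
apply/eqP; rewrite -eqp_monic ?monicize_monic ?monic1 //.
by apply: eqp_trans (monicizeE x0) _; rewrite -size_poly_eq1 s.
Qed.

Lemma mgcd_eq1 x y : (mgcd x y == 1) = coprimep x y.
Proof. by rewrite /mgcd monicize_eq1. Qed.
End Gen.
Lemma natF_neq0 (F : finFieldType) (m : nat) : (0 < m)%N -> coprime m #|F| -> m%:R != 0 :> F.
Proof.
move=> m0 cm; have [p pp pc] := finPcharP F.
rewrite -(dvdn_pcharf pc); apply/negP => pm.
have cF : #|F| = (p ^ logn p #|F|)%N by exact: (card_pprimeChar pc).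
have pF : (p %| #|F|)%N.
  move: cF; case: (logn p #|F|) => [|k] cF.
    by have := finNzRing_gt1 F; rewrite cF.
  by rewrite cF expnS dvdn_mulr.
have : (p %| gcdn m #|F|)%N by rewrite dvdn_gcd pm pF.
rewrite (eqP cm) dvdn1 => /eqP p1.
by move: pp; rewrite p1.
Qed.

Lemma xm1_neq0 (F : finFieldType) m : (0 < m)%N -> xm1 m != 0 :> {poly F}.
Proof. by move=> m0; rewrite -size_poly_gt0 /xm1 size_XnsubC. Qed.

Lemma size_xm1 (F : finFieldType) m : (0 < m)%N -> size (xm1 m : {poly F}) = m.+1.
Proof. by move=> m0; rewrite /xm1 size_XnsubC. Qed.

Lemma xm1_monic (F : finFieldType) m : (0 < m)%N -> (xm1 m : {poly F}) \is monic.
Proof. by move=> m0; rewrite /xm1 monicXnsubC. Qed.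

Lemma sqf_xm1 (F : finFieldType) m : (0 < m)%N -> coprime m #|F| -> sqf (xm1 m : {poly F}).
Proof.
move=> m0 cm p ip; apply/negP => /dvdpP [r er].
have pN : p %| xm1 m by rewrite er mulrA dvdp_mulIr.
have pD : p %| (xm1 m)^`().
  rewrite er mulrA derivM; apply: dvdp_add; first exact: dvdp_mulIr.
  by apply: dvdp_mulr; apply: dvdp_mulIr.
move: pD; rewrite /xm1 derivB derivC subr0 derivXn -scaler_nat dvdpZr ?natF_neq0 // => pX.
have pXm : p %| 'X^m by rewrite -(prednK m0) exprS; apply: dvdp_mull.
have : p %| 1 by have := dvdp_sub pXm pN; rewrite /xm1 opprB addrC subrK.
by rewrite (negPf (irr_ndvd1 ip)).
Qed.
Section Codes.
Variable F : finFieldType.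
Variable m : nat.
Hypothesis hm : (0 < m)%N.
Local Notation N := (xm1 m : {poly F}).
Implicit Types p q a b x y : {poly F}.

Definition spanP (C D : {poly F} * {poly F} -> Prop) :=
  forall u, inR2 m u -> exists c d, C c /\ D d /\ u = (c.1 + d.1, c.2 + d.2).

Lemma span_nec1 g11 g12 g22 f11 f12 f22 p :
  spanP (qc_code m g11 g12 g22) (qc_code m f11 f12 f22) ->
  irreducible_poly p -> p %| N -> p %| g11 -> p %| f11 -> False.
Proof.
move=> sp ip pN pg pf.
have [|c [d [[a [b ec]] [[a' [b' ed]] e]]]] := sp (1, 0).
  by split; rewrite /= ?size_poly1 ?size_poly0.
move: e => [e1 _]; have : p %| 1.
  rewrite e1 ec ed /=; apply: dvdp_add; rewrite dvdp_modN //; exact: dvdp_mull.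
by rewrite (negPf (irr_ndvd1 ip)).
Qed.

Lemma span_nec2 g11 g12 g22 f11 f12 f22 p :
  spanP (qc_code m g11 g12 g22) (qc_code m f11 f12 f22) ->
  irreducible_poly p -> p %| N -> p %| g22 -> p %| f22 ->
  p %| g11 * f12 - g12 * f11 -> False.
Proof.
move=> sp ip pN pg pf pD.
have [|c [d [[a [b ec]] [[a' [b' ed]] [e1 e2]]]]] := sp (0, 1).
  by split; rewrite /= ?size_poly1 ?size_poly0.
set X := a * g11 + a' * f11.
set Y := a * g12 + b * g22 + (a' * f12 + b' * f22).
have h1 : (a * g11) %% N = c.1 by rewrite ec.
have h2 : (a' * f11) %% N = d.1 by rewrite ed.
have h3 : (a * g12 + b * g22) %% N = c.2 by rewrite ec.
have h4 : (a' * f12 + b' * f22) %% N = d.2 by rewrite ed.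
have pX : p %| X by rewrite -(dvdp_modN _ pN) modpD h1 h2 -e1 dvdp0.
have pY : p %| Y - 1.
  have sN : (1 < size N)%N by rewrite size_xm1.
  by rewrite -(dvdp_modN _ pN) modpD modpN modpD h3 h4 -e2 modp_small ?size_poly1 // subrr dvdp0.
have pg11 : p %| g11.
  have -> : g11 = - g11 * (Y - 1) + (a' * (g11 * f12 - g12 * f11) + g11 * (b * g22 + b' * f22))
      + g12 * X by rewrite /X /Y; ring.
  apply: dvdp_add; last exact: dvdp_mull _ pX.
  apply: dvdp_add; first exact: dvdp_mull _ pY.
  apply: dvdp_add; first exact: dvdp_mull _ pD.
  by apply: dvdp_mull; apply: dvdp_add; apply: dvdp_mull.
have pf11 : p %| f11.
  have -> : f11 = - f11 * (Y - 1) + (- a * (g11 * f12 - g12 * f11) + f11 * (b * g22 + b' * f22))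
      + f12 * X by rewrite /X /Y; ring.
  apply: dvdp_add; last exact: dvdp_mull _ pX.
  apply: dvdp_add; first exact: dvdp_mull _ pY.
  apply: dvdp_add; first exact: dvdp_mull _ pD.
  by apply: dvdp_mull; apply: dvdp_add; apply: dvdp_mull.
exact: (span_nec1 sp ip pN pg11 pf11).
Qed.
End Codes.

Lemma bezout1 (F : finFieldType) (x y : {poly F}) : coprimep x y -> exists u v, u * x + v * y = 1.
Proof.
case/Bezout_coprimepP => [[u v]] /= h.
move: h; rewrite -size_poly_eq1 => /size_poly1P [c c0 ec].
exists ((c^-1)%:P * u), ((c^-1)%:P * v).
by rewrite -!mulrA -mulrDr ec -polyCM mulVf.
Qed.

Lemma bezout3 (F : finFieldType) (x y z : {poly F}) : coprimep (gcdp x y) z ->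
  exists u v w, u * x + v * y + w * z = 1.
Proof.
case: (Bezoutp x y) => [[k1 k2]] /= hk.
rewrite -(eqp_coprimepl _ hk) => /bezout1 [s [t e]].
by exists (s * k1), (s * k2), t; rewrite -e; ring.
Qed.

Section Codes2.
Variable F : finFieldType.
Variable m : nat.
Hypothesis hm : (0 < m)%N.
Local Notation N := (xm1 m : {poly F}).
Implicit Types p q a b x y : {poly F}.

Lemma span_suff (g11 g12 g22 f11 f12 f22 : {poly F}) :
  coprimep g11 f11 -> coprimep (gcdp g22 f22) (g11 * f12 - g12 * f11) ->
  spanP m (qc_code m g11 g12 g22) (qc_code m f11 f12 f22).
Proof.
move=> /bezout1 [u0 [v0 e1]] /bezout3 [k1 [k2 [t e2]]] [u1 u2] [/= s1 s2].
set s0 := u0 * g12 + v0 * f12.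
set t_ := u2 - u1 * s0.
set A := u1 * u0 - t_ * f11 * t.
set A' := u1 * v0 + t_ * g11 * t.
exists ((A * g11) %% N, (A * g12 + (t_ * k1) * g22) %% N).
exists ((A' * f11) %% N, (A' * f12 + (t_ * k2) * f22) %% N).
split; first by exists A, (t_ * k1).
split; first by exists A', (t_ * k2).
have sN : forall w : {poly F}, (size w <= m)%N -> w %% N = w.
  by move=> w hw; rewrite modp_small // size_xm1.
rewrite /= -!modpD.
have -> : A * g11 + A' * f11 = u1 * (u0 * g11 + v0 * f11) by rewrite /A /A'; ring.
have -> : A * g12 + t_ * k1 * g22 + (A' * f12 + t_ * k2 * f22)
   = u1 * s0 + t_ * (k1 * g22 + k2 * f22 + t * (g11 * f12 - g12 * f11)).
  by rewrite /A /A' /s0; ring.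
by rewrite e1 e2 !mulr1 /t_ (addrC (u1 * s0)) subrK !sN.
Qed.

Lemma modN_addM (x y : {poly F}) : (x + y * N) %% N = x %% N.
Proof. by rewrite modpD modp_mull addr0. Qed.

Lemma irr_coprime p x : irreducible_poly p -> ~~ (p %| x) -> coprimep x p.
Proof. by move=> ip px; rewrite coprimep_sym irreducible_poly_coprime. Qed.

Lemma int_full (g11 g12 g22 : {poly F}) p : irreducible_poly p -> p %| N ->
  ~~ (p %| g11) -> ~~ (p %| g22) -> forall v1 v2,
  qc_code m g11 g12 g22 (((N %/ p) * v1) %% N, ((N %/ p) * v2) %% N).
Proof.
move=> ip pN pg1 pg2 v1 v2.
have [u [w e1]] := bezout1 (irr_coprime ip pg1).
have [u' [w' e2]] := bezout1 (irr_coprime ip pg2).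
set P := N %/ p.
have eN : N = P * p by rewrite divpK.
set al := u * v1.
set be := u' * (v2 - al * g12).
exists (P * al), (P * be).
congr (_, _).
  have -> : P * al * g11 = P * v1 + (- (v1 * w)) * (P * p).
    have -> : P * al * g11 = P * v1 * (u * g11) by rewrite /al; ring.
    by rewrite -(addrK (w * p) (u * g11)) e1; ring.
  by rewrite -eN modN_addM.
have -> : P * al * g12 + P * be * g22 = P * v2 + (- (w' * (v2 - al * g12))) * (P * p).
  have -> : P * be * g22 = P * (v2 - al * g12) * (u' * g22) by rewrite /be; ring.
  by rewrite -(addrK (w' * p) (u' * g22)) e2; ring.
by rewrite -eN modN_addM.
Qed.

Definition intP (C D : {poly F} * {poly F} -> Prop) :=
  forall c, C c -> D c -> c = (0, 0).

Lemma int_nec (g11 g12 g22 f11 f12 f22 : {poly F}) p :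
  intP (qc_code m g11 g12 g22) (qc_code m f11 f12 f22) ->
  irreducible_poly p -> p %| N -> ~~ (p %| g11) -> ~~ (p %| g22) ->
  ~~ (p %| f11) || ~~ (p %| f22) -> False.
Proof.
move=> hi ip pN pg1 pg2 hf.
have N0 : N != 0 by exact: xm1_neq0.
have p0 : p != 0 by exact: irredp_neq0.
set P := N %/ p.
have eN : N = P * p by rewrite divpK.
have P0 : P != 0 by apply: contraNneq N0 => e; rewrite eN e mul0r.
have key : forall x, (P * x) %% N = 0 -> p %| x.
  by move=> x /modp_eq0P; rewrite {1}eN dvdp_mul2l.
case/orP: hf => hf.
  have := hi _ (int_full g12 ip pN pg1 pg2 f11 f12).
  have -> : ((P * f12) %% N) = ((P * f11) %% N, (P * f12 + 0 * f22) %% N).2 by rewrite mul0r addr0.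
  move=> /(_ (ex_intro _ P (ex_intro _ 0 (erefl _)))) [h1 h2].
  by move: (key _ h1); rewrite (negPf hf).
have := hi _ (int_full g12 ip pN pg1 pg2 0 f22).
have -> : ((P * 0) %% N) = ((0 * f11) %% N) by rewrite mulr0 mul0r.
have -> : ((P * f22) %% N) = ((0 * f12 + P * f22) %% N) by rewrite mul0r add0r.
move=> /(_ (ex_intro _ 0 (ex_intro _ P (erefl _)))) [h1 h2].
by move: h2; rewrite mul0r add0r => /key; rewrite (negPf hf).
Qed.

Definition locb (G1 G2 F1 F2 Dl : bool) :=
  [&& ~~ (G1 && F1), ~~ [&& G2, F2 & Dl] & (2 <= G1 + G2 + F1 + F2)%N].

Lemma loc_zero (p g11 g12 g22 f11 f12 f22 a b a' b' : {poly F}) :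
  irreducible_poly p ->
  (p %| g11 -> p %| g22 -> p %| g12) -> (p %| f11 -> p %| f22 -> p %| f12) ->
  locb (p %| g11) (p %| g22) (p %| f11) (p %| f22) (p %| g11 * f12 - g12 * f11) ->
  p %| a * g11 - a' * f11 -> p %| (a * g12 + b * g22) - (a' * f12 + b' * f22) ->
  p %| a * g11 /\ p %| a * g12 + b * g22.
Proof.
move=> ip hG hF hl h1 h2.
have fromY1 : p %| a' * f11 -> p %| a * g11.
  move=> hy; have -> : a * g11 = (a * g11 - a' * f11) + a' * f11 by ring.
  by apply: dvdp_add.
have fromX1 : p %| a * g11 -> p %| a' * f11.
  move=> hx; have -> : a' * f11 = a * g11 - (a * g11 - a' * f11) by ring.
  by apply: dvdp_sub.
have fromY2 : p %| a' * f12 + b' * f22 -> p %| a * g12 + b * g22.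
  move=> hy; have -> : a * g12 + b * g22 = ((a * g12 + b * g22) - (a' * f12 + b' * f22)) + (a' * f12 + b' * f22) by ring.
  by apply: dvdp_add.
have froma : p %| a -> p %| g22 -> p %| a * g11 /\ p %| a * g12 + b * g22.
  by move=> pa pg; split; [apply: dvdp_mulr|apply: dvdp_add; [apply: dvdp_mulr|apply: dvdp_mull]].
have Sa : p %| g11 -> p %| g22 -> p %| a * g11 /\ p %| a * g12 + b * g22.
  move=> G1 G2; have pg12 := hG G1 G2; split; first exact: dvdp_mull.
  by apply: dvdp_add; apply: dvdp_mull.
have Sb : p %| f11 -> p %| f22 -> p %| a * g11 /\ p %| a * g12 + b * g22.
  move=> F1 F2; have pf12 := hF F1 F2.
  have py : p %| a' * f11 by apply: dvdp_mull.
  split; first exact: fromY1.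
  by apply: fromY2; apply: dvdp_add; apply: dvdp_mull.
have Sc : p %| g11 -> ~~ (p %| f11) -> p %| f22 -> p %| a * g11 /\ p %| a * g12 + b * g22.
  move=> G1 F1 F2.
  have px : p %| a * g11 by apply: dvdp_mull.
  have /orP[pa'|] := irr_dvdM ip (fromX1 px); last by rewrite (negPf F1).
  split => //; apply: fromY2; apply: dvdp_add; [apply: dvdp_mulr|apply: dvdp_mull] => //.
have Sd : p %| g22 -> p %| f11 -> ~~ (p %| g11) -> p %| a * g11 /\ p %| a * g12 + b * g22.
  move=> G2 F1 G1.
  have py : p %| a' * f11 by apply: dvdp_mull.
  have /orP[pa|] := irr_dvdM ip (fromY1 py); last by rewrite (negPf G1).
  exact: froma.
have Se : p %| g22 -> p %| f22 -> ~~ (p %| g11) -> ~~ (p %| g11 * f12 - g12 * f11) ->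
    p %| a * g11 /\ p %| a * g12 + b * g22.
  move=> G2 F2 G1 hD.
  have paD : p %| a * (g11 * f12 - g12 * f11).
    have -> : a * (g11 * f12 - g12 * f11) = f12 * (a * g11 - a' * f11)
       - f11 * ((a * g12 + b * g22) - (a' * f12 + b' * f22)) + f11 * b * g22 - f11 * b' * f22
      by ring.
    apply: dvdp_sub; last by apply: dvdp_mull.
    apply: dvdp_add; last by apply: dvdp_mull.
    by apply: dvdp_sub; apply: dvdp_mull.
  have /orP[pa|] := irr_dvdM ip paD; last by rewrite (negPf hD).
  exact: froma.
move: hl; rewrite /locb.
case G1: (p %| g11); case G2: (p %| g22); case F1: (p %| f11); case F2: (p %| f22) => //= hl;
  first [ by apply: Sa | by apply: Sb | by apply: Sc; rewrite ?F1
        | by apply: Sd; rewrite ?G1 | by apply: Se; rewrite ?G1 //; move: hl; rewrite ?andbT ].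
Qed.

Lemma modN_eqdvd (p x y : {poly F}) : p %| N -> x %% N = y %% N -> p %| x - y.
Proof. by move=> pN e; rewrite -(dvdp_modN _ pN) modpD modpN e subrr dvdp0. Qed.

Lemma modN_zero (x : {poly F}) : N %| x %% N -> x %% N = 0.
Proof. by move=> /modp_eq0P; rewrite modp_id. Qed.

Lemma int_suff (g11 g12 g22 f11 f12 f22 : {poly F}) : sqf N ->
  (forall p, irreducible_poly p -> p %| N -> p %| g11 -> p %| g22 -> p %| g12) ->
  (forall p, irreducible_poly p -> p %| N -> p %| f11 -> p %| f22 -> p %| f12) ->
  (forall p, irreducible_poly p -> p %| N ->
     locb (p %| g11) (p %| g22) (p %| f11) (p %| f22) (p %| g11 * f12 - g12 * f11)) ->
  intP (qc_code m g11 g12 g22) (qc_code m f11 f12 f22).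
Proof.
move=> sN hG hF hL c [a [b ec]] [a' [b' ed]].
have N0 : N != 0 by exact: xm1_neq0.
have := ed; rewrite ec => -[e1 e2].
have loc : forall p, irreducible_poly p -> p %| N ->
    p %| (a * g11) %% N /\ p %| (a * g12 + b * g22) %% N.
  move=> p ip pN.
  have := @loc_zero p g11 g12 g22 f11 f12 f22 a b a' b' ip (hG p ip pN) (hF p ip pN) (hL p ip pN)
     (modN_eqdvd pN e1) (modN_eqdvd pN e2).
  case=> h1 h2.
  by rewrite !dvdp_modN.
congr (_, _); apply: modN_zero; apply: (sqf_dvd N0 sN (dvdpp _)) => p ip pN;
  by have [] := loc p ip pN.
Qed.

Lemma intP_sym (C D : {poly F} * {poly F} -> Prop) : intP C D -> intP D C.
Proof. by move=> h c dc cc; apply: h. Qed.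

Lemma lcp_loc (g11 g12 g22 f11 f12 f22 : {poly F}) : sqf N ->
  g11 %| N -> g22 %| N -> f11 %| N -> f22 %| N ->
  (forall p, irreducible_poly p -> p %| N -> p %| g11 -> p %| g22 -> p %| g12) ->
  (forall p, irreducible_poly p -> p %| N -> p %| f11 -> p %| f22 -> p %| f12) ->
  LCP m (qc_code m g11 g12 g22) (qc_code m f11 f12 f22) <->
  (forall p, irreducible_poly p -> p %| N ->
     locb (p %| g11) (p %| g22) (p %| f11) (p %| f22) (p %| g11 * f12 - g12 * f11)).
Proof.
move=> sN g11N g22N f11N f22N hG hF.
have N0 : N != 0 by exact: xm1_neq0.
have g110 : g11 != 0 by apply: contraNneq N0 => e; move: g11N; rewrite e dvd0p.
have g220 : g22 != 0 by apply: contraNneq N0 => e; move: g22N; rewrite e dvd0p.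
split.
  case=> hi hs p ip pN; rewrite /locb; apply/and3P; split.
  - by apply/negP => /andP[a b]; exact: (span_nec1 hm hs ip pN a b).
  - by apply/negP => /and3P[a b c]; exact: (span_nec2 hm hs ip pN a b c).
  have hi' := intP_sym hi.
  rewrite leqNgt; apply/negP => hc.
  move: hc; case G1: (p %| g11); case G2: (p %| g22); case F1: (p %| f11); case F2: (p %| f22) => //= _;
  first [ by apply: (int_nec hi ip pN); rewrite ?G1 ?G2 ?F1 ?F2
        | by apply: (int_nec hi' ip pN); rewrite ?G1 ?G2 ?F1 ?F2 ].
move=> hL; split; first exact: int_suff.
apply: span_suff.
  apply: coprime_irr => // p ip pg pf.
  by have := hL p ip (dvdp_trans pg g11N); rewrite /locb pg pf.
apply: coprime_irr; first by rewrite gcdp_eq0 negb_and g220.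
move=> p ip; rewrite dvdp_gcd => /andP[pg pf] pD.
by have := hL p ip (dvdp_trans pg g22N); rewrite /locb pg pf pD /= andbF.
Qed.
End Codes2.

Section Paper.
Variable F : finFieldType.
Variable N : {poly F}.
Hypothesis N0 : N != 0.
Hypothesis sN : sqf N.
Hypothesis Nm : N \is monic.

Lemma dvdp_mgcd (p x y : {poly F}) : (p %| mgcd x y) = (p %| x) && (p %| y).
Proof.
have [g0|g0] := eqVneq (gcdp x y) 0.
  move/eqP: (g0); rewrite gcdp_eq0 => /andP[/eqP -> /eqP ->].
  by rewrite /mgcd gcd0p /monicize scaler0 !dvdp0.
by rewrite /mgcd (eqp_dvdr _ (monicizeE g0)) dvdp_gcd.
Qed.

Lemma mgcd_neq0 (x y : {poly F}) : x != 0 -> mgcd x y != 0.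
Proof.
move=> x0; have g0 : gcdp x y != 0 by rewrite gcdp_eq0 negb_and x0.
by rewrite -size_poly_gt0 (eqp_size (monicizeE g0)) size_poly_gt0.
Qed.

Lemma mgcd_monic (x y : {poly F}) : x != 0 -> mgcd x y \is monic.
Proof. by move=> x0; apply: monicize_monic; rewrite gcdp_eq0 negb_and x0. Qed.

Lemma mgcd_dvdl (x y : {poly F}) : mgcd x y %| x.
Proof. by have := dvdpp (mgcd x y); rewrite dvdp_mgcd => /andP[]. Qed.

Lemma mgcd_dvdr (x y : {poly F}) : mgcd x y %| y.
Proof. by have := dvdpp (mgcd x y); rewrite dvdp_mgcd => /andP[]. Qed.

Lemma irr_sqf2 (p x y : {poly F}) : irreducible_poly p -> x * y %| N -> p %| x -> p %| y -> False.
Proof.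
move=> ip xyN px py; have : p * p %| N by apply: dvdp_trans xyN; apply: dvdp_mul.
by rewrite (negPf (sN ip)).
Qed.

Lemma mlcm_props (y1 y2 : {poly F}) : y1 %| N -> y2 %| N ->
  [/\ mlcm y1 y2 %| N, mlcm y1 y2 \is monic &
      forall p, irreducible_poly p -> (p %| mlcm y1 y2) = (p %| y1) || (p %| y2)].
Proof.
move=> y1N y2N.
have y10 : y1 != 0 by apply: contraNneq N0 => e; move: y1N; rewrite e dvd0p.
have y20 : y2 != 0 by apply: contraNneq N0 => e; move: y2N; rewrite e dvd0p.
set d := gcdp y1 y2.
have d0 : d != 0 by rewrite gcdp_eq0 negb_and y10.
have e1 : y1 = (y1 %/ d) * d by rewrite divpK // dvdp_gcdl.
have e2 : y2 = (y2 %/ d) * d by rewrite divpK // dvdp_gcdr.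
have l1 : (y1 * y2) %/ d = (y1 %/ d) * y2.
  by rewrite {1}e1 -mulrA (mulrC d) mulrA mulpK.
have l2 : (y1 * y2) %/ d = y1 * (y2 %/ d).
  by rewrite {1}e2 mulrA mulpK.
have l0 : (y1 * y2) %/ d != 0 by rewrite l2 mulf_neq0 // ; apply: contraNneq y20 => e; rewrite e2 e mul0r.
have cp : coprimep (y2 %/ d) (y1 %/ d).
  by rewrite coprimep_sym coprimep_div_gcd // y10.
have lN : (y1 * y2) %/ d %| N.
  case/dvdpP: y1N => s es.
  rewrite l2 es (mulrC s) dvdp_mul2l //.
  by rewrite -(Gauss_dvdpl s cp) -(dvdp_mul2r _ _ d0) -e2 -mulrA -e1 -es.
split.
- by apply: dvdp_trans lN; rewrite (eqp_dvdl _ (monicizeE l0)).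
- exact: monicize_monic.
move=> p ip; rewrite /mlcm (eqp_dvdr _ (monicizeE l0)).
apply/idP/idP.
  rewrite l1 => /(irr_dvdM ip) /orP[h|->]; last by rewrite orbT.
  by rewrite (dvdp_trans h) // {2}e1 dvdp_mulIl.
case/orP => h.
  by rewrite l2; apply: dvdp_mulr.
by rewrite l1; apply: dvdp_mull.
Qed.

Lemma quot_props (l : {poly F}) : l \is monic -> l %| N ->
  [/\ N %/ l \is monic, N %/ l %| N &
     forall p, irreducible_poly p -> p %| N -> (p %| N %/ l) = ~~ (p %| l)].
Proof.
move=> lm lN; have eN : N = (N %/ l) * l by rewrite divpK.
split.
- by rewrite -(monicMr _ lm) -eN.
- by rewrite {2}eN dvdp_mulIl.
move=> p ip pN; apply/idP/idP.
  move=> pB; apply/negP => pl; apply: (irr_sqf2 ip _ pB pl); by rewrite -eN.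
move=> npl; move: pN; rewrite {1}eN => /(irr_dvdM ip) /orP[//|pl].
by rewrite pl in npl.
Qed.

Lemma eq_monic_div (A B : {poly F}) : A \is monic -> B \is monic -> A %| N -> B %| N ->
  (forall p, irreducible_poly p -> p %| N -> (p %| A) = (p %| B)) -> A = B.
Proof.
move=> Am Bm AN BN h; apply/eqP; rewrite -eqp_monic //; apply/andP; split.
  apply: (sqf_dvd N0 sN AN) => p ip pA; rewrite -h //; exact: dvdp_trans pA AN.
apply: (sqf_dvd N0 sN BN) => p ip pB; rewrite h //; exact: dvdp_trans pB BN.
Qed.

Lemma paper2 (x1 x2 y1 y2 : {poly F}) : x1 %| N -> y1 %| N -> y2 %| N ->
  (mgcd x1 x2 = N %/ mlcm y1 y2) <->
  (forall p, irreducible_poly p -> p %| N ->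
      (p %| x1) && (p %| x2) = ~~ (p %| y1) && ~~ (p %| y2)).
Proof.
move=> x1N y1N y2N.
have x10 : x1 != 0 by apply: contraNneq N0 => e; move: x1N; rewrite e dvd0p.
have [lN lm hl] := mlcm_props y1N y2N.
have [Bm BN hB] := quot_props lm lN.
split.
  by move=> e p ip pN; rewrite -dvdp_mgcd e hB // hl // negb_or.
move=> h; apply: eq_monic_div => //.
- exact: mgcd_monic.
- exact: dvdp_trans (mgcd_dvdl _ _) x1N.
by move=> p ip pN; rewrite dvdp_mgcd hB // hl // negb_or h.
Qed.

Lemma paper1 (x y : {poly F}) : x %| N ->
  (mgcd x y = 1) <-> (forall p, irreducible_poly p -> p %| N -> ~~ ((p %| x) && (p %| y))).
Proof.
move=> xN.
have x0 : x != 0 by apply: contraNneq N0 => e; move: xN; rewrite e dvd0p.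
split.
  move=> /eqP; rewrite mgcd_eq1 => c p ip pN; apply/negP => /andP[px py].
  exact: (coprime_irrN c ip px py).
move=> h; apply/eqP; rewrite mgcd_eq1; apply: coprime_irr => // p ip px py.
by have := h p ip (dvdp_trans px xN); rewrite px py.
Qed.

Lemma quot_gcd (x1 x2 : {poly F}) : x2 %| N ->
  [/\ x2 %/ mgcd x1 x2 %| N, x2 %/ mgcd x1 x2 != 0 &
    forall p, irreducible_poly p -> p %| N ->
      (p %| x2 %/ mgcd x1 x2) = (p %| x2) && ~~ (p %| x1)].
Proof.
move=> x2N.
have x20 : x2 != 0 by apply: contraNneq N0 => e; move: x2N; rewrite e dvd0p.
set g := mgcd x1 x2.
have g0 : g != 0 by rewrite /g /mgcd -size_poly_gt0 (eqp_size (monicizeE _)) ?size_poly_gt0 gcdp_eq0 negb_and x20 orbT.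
have e : x2 = (x2 %/ g) * g by rewrite divpK // /g mgcd_dvdr.
have q0 : x2 %/ g != 0 by apply: contraNneq x20 => h; rewrite e h mul0r.
have qx : x2 %/ g %| x2 by rewrite {2}e dvdp_mulIl.
split => //; first exact: dvdp_trans qx x2N.
move=> p ip pN; apply/idP/idP.
  move=> pq; rewrite (dvdp_trans pq qx) /=; apply/negP => px1.
  have pg : p %| g by rewrite /g dvdp_mgcd px1 (dvdp_trans pq qx).
  by apply: (irr_sqf2 ip _ pq pg); rewrite -e.
case/andP => px2 npx1; move: px2; rewrite {1}e => /(irr_dvdM ip) /orP[//|pg].
by move: npx1; rewrite (dvdp_trans pg) // /g mgcd_dvdl.
Qed.
End Paper.

Definition paperb (G1 G2 F1 F2 Dl : bool) :=
  [&& ~~ (F1 && G1), (G1 && G2) == (~~ F1 && ~~ F2), (F1 && F2) == (~~ G1 && ~~ G2)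
    & ~~ (((G2 && ~~ G1) && (F2 && ~~ F1)) && Dl)].

Lemma loc_paper (G1 G2 F1 F2 Dl : bool) :
  (G1 && G2 ==> Dl) -> (F1 && F2 ==> Dl) -> (G1 && F1 ==> Dl) ->
  locb G1 G2 F1 F2 Dl = paperb G1 G2 F1 F2 Dl.
Proof. by case: G1; case: G2; case: F1; case: F2; case: Dl. Qed.

Lemma sqf_div12 (F : finFieldType) (N g11 g22 g12 p : {poly F}) : sqf N ->
  g11 * g22 %| N * g12 -> irreducible_poly p -> p %| g11 -> p %| g22 -> p %| g12.
Proof.
move=> sN hg ip pg1 pg2; apply: contraT => npg.
have c : coprimep (p * p) g12.
  by rewrite coprimepMl coprimep_sym (irr_coprime ip npg).
have : p * p %| N * g12 by apply: dvdp_trans hg; exact: dvdp_mul.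
by rewrite Gauss_dvdpl // (negPf (sN p ip)).
Qed.

Unset Implicit Arguments.

Theorem theorem3p3 (F : finFieldType) (m : nat) (hm : (0 < m)%N)
  (hcop : coprime m #|F|)
  (g11 g12 g22 f11 f12 f22 : {poly F})
  (hg11 : g11 %| xm1 m) (hg22 : g22 %| xm1 m)
  (hg12 : (size g12 < size g22)%N)
  (hg : g11 * g22 %| xm1 m * g12)
  (hf11 : f11 %| xm1 m) (hf22 : f22 %| xm1 m)
  (hf12 : (size f12 < size f22)%N)
  (hf : f11 * f22 %| xm1 m * f12) :
  let g := mgcd g11 g22 in
  let f := mgcd f11 f22 in
  let g22' := g22 %/ g in
  let f22' := f22 %/ f in
  LCP m (qc_code m g11 g12 g22) (qc_code m f11 f12 f22) <->
  [/\ mgcd f11 g11 = 1,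
      g = xm1 m %/ mlcm f11 f22,
      f = xm1 m %/ mlcm g11 g22
    & mgcd (mgcd g22' f22') (g11 * f12 - g12 * f11) = 1].
Proof.
move=> g f g22' f22'; rewrite /g22' /f22' /g /f.
have N0 : xm1 m != 0 :> {poly F} by exact: xm1_neq0.
have sN : sqf (xm1 m : {poly F}) by exact: sqf_xm1.
have hG := fun p (ip : irreducible_poly p) (_ : p %| xm1 m) => sqf_div12 sN hg ip.
have hF := fun p (ip : irreducible_poly p) (_ : p %| xm1 m) => sqf_div12 sN hf ip.
have Nm : (xm1 m : {poly F}) \is monic by exact: xm1_monic.
have e1 := paper1 N0 g11 hf11.
have e2 := paper2 N0 sN Nm g22 hg11 hf11 hf22.
have e3 := paper2 N0 sN Nm f22 hf11 hg11 hg22.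
have [q1N q10 q1] := quot_gcd N0 sN g11 hg22.
have [q2N q20 q2] := quot_gcd N0 sN f11 hf22.
have e4 := paper1 N0 (g11 * f12 - g12 * f11) (dvdp_trans (mgcd_dvdl _ _) q1N).
have LP : forall p, irreducible_poly p -> p %| xm1 m ->
   locb (p %| g11) (p %| g22) (p %| f11) (p %| f22) (p %| g11 * f12 - g12 * f11) =
   paperb (p %| g11) (p %| g22) (p %| f11) (p %| f22) (p %| g11 * f12 - g12 * f11).
  move=> p ip pN; apply: loc_paper; apply/implyP => /andP[a b].
  - by apply: dvdp_sub; apply: dvdp_mulr => //; exact: (hG p ip pN a b).
  - by apply: dvdp_sub; apply: dvdp_mull => //; exact: (hF p ip pN a b).
  - by apply: dvdp_sub; [apply: dvdp_mulr|apply: dvdp_mull].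
rewrite (lcp_loc hm sN hg11 hg22 hf11 hf22 hG hF).
split.
  move=> hL; have hP : forall p, irreducible_poly p -> p %| xm1 m ->
      paperb (p %| g11) (p %| g22) (p %| f11) (p %| f22) (p %| g11 * f12 - g12 * f11).
    by move=> p ip pN; rewrite -LP // hL.
  split.
  - by apply/e1 => p ip pN; have /and4P[] := hP p ip pN.
  - by apply/e2 => p ip pN; have /and4P[_ /eqP -> _ _] := hP p ip pN.
  - by apply/e3 => p ip pN; have /and4P[_ _ /eqP -> _] := hP p ip pN.
  apply/e4 => p ip pN; rewrite dvdp_mgcd q1 // q2 //.
  by have /and4P[] := hP p ip pN.
case=> /e1 h1 /e2 h2 /e3 h3 /e4 h4 p ip pN.
rewrite LP // /paperb h1 // h2 // h3 // !eqxx /=.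
by have := h4 p ip pN; rewrite dvdp_mgcd q1 // q2.
Qed.
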